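(* Let $N\ge 3$, $K\ge 2$ and $L$ be integers with $1\le L<N-1$, let $M=N(L+1)^{K-1}$, and define costs $d_m=L$ for $m\in[1:N]$ and $d_m=L+1$ for $m\in[N+1:M]$. Let $C=\left(\sum_{k=0}^{K-1}N^{-k}\right)^{-1}$ and $1\le D\le 1/C$. Let $\mathcal{F}_D$ be the set of probability vectors $P=(p_1,\dots,p_M)$ with $\frac1L\sum_{m=1}^M p_md_m=D$, and $U$ the uniform distribution on $[1:M]$. (i) For every $0<\alpha<\infty$ (including $\alpha=1$), the unique minimizer of $D_\alpha(P\|U)$ over $\mathcal{F}_D$ is $$p_m=\begin{cases}\dfrac{1-L(D-1)}{N}, & m\in[1:N],\\[2mm]\dfrac{L(D-1)}{N(L+1)^{K-1}-N}, & m\in[N+1:M].\end{cases}$$ (ii) For $\alpha=\infty$, $P\in\mathcal{F}_D$ minimizes $D_\infty(P\|U)$ over $\mathcal{F}_D$ if and only if $p_m=\frac{1-L(D-1)}{N}$ for all $m\in[1:N]$ and $(p_m)_{m\in[N+1:M]}$ is any nonnegative vector with $\sum_{m=N+1}^{M}p_m=L(D-1)$ and $p_m\le\frac{1-L(D-1)}{N}$ for each $m\in[N+1:M]$.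
   Context: Notation: $[i:j]=\{i,\dots,j\}$; natural logarithms. Rényi divergence for probability vectors $P,U$ on $[1:M]$ with $u_m>0$: $D_\alpha(P\|U)=\frac{1}{\alpha-1}\log\sum_m p_m^\alpha u_m^{1-\alpha}$ for $0<\alpha<\infty,\alpha\ne1$; $D_1(P\|U)=\sum_m p_m\log\frac{p_m}{u_m}$ (with $0\log0=0$); $D_\infty(P\|U)=\log\max_m\frac{p_m}{u_m}$. (Interpretation: the $N(L+1)^{K-1}$ query options of the paper's alternative probabilistic PIR scheme with $N$ databases, $K$ messages and message length $L$; the first $N$ options have download cost $L$, the rest $L+1$; $D$ is the expected download cost normalized by $L$.) *)

(* Defs.v *)
From HB Require Import structures.
From mathcomp Require Import all_boot all_order all_algebra.
From mathcomp Require Import all_classical all_reals all_analysis.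
Set Implicit Arguments. Unset Strict Implicit. Unset Printing Implicit Defensive.
Import Order.TTheory GRing.Theory Num.Theory.
Local Open Scope ring_scope.

(* M = N (L+1)^(K-1) query options, indexed 0..M-1 (paper's m = index+1). *)
Definition Mdim (N K L : nat) : nat := (N * L.+1 ^ K.-1)%N.

Section Defs.
Variable R : realType.

Definition dcost (N L : nat) (m : nat) : R :=
  if (m < N)%N then L%:R else L.+1%:R.

Definition is_prob (M : nat) (P : 'I_M -> R) : Prop :=
  (forall m, 0 <= P m) /\ \sum_(m < M) P m = 1.

Definition FD (N K L : nat) (D : R) (P : 'I_(Mdim N K L) -> R) : Prop :=
  is_prob P /\ (\sum_(m < Mdim N K L) P m * dcost N L m) / L%:R = D.

Definition unif (M : nat) : 'I_M -> R := fun _ => (M%:R)^-1.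

Definition renyi (M : nat) (a : R) (P U : 'I_M -> R) : R :=
  if a == 1 then \sum_(m < M) (if P m == 0 then 0 else P m * ln (P m / U m))
  else (a - 1)^-1 * ln (\sum_(m < M) (P m `^ a) * (U m `^ (1 - a))).

Definition renyi_inf (M : nat) (P U : 'I_M -> R) : R :=
  ln (\big[Num.max/0]_(m < M) (P m / U m)).

Definition Pstar (N K L : nat) (D : R) : 'I_(Mdim N K L) -> R :=
  fun m => if (m < N)%N then (1 - L%:R * (D - 1)) / N%:R
           else L%:R * (D - 1) / ((Mdim N K L)%:R - N%:R).

End Defs.

Arguments dcost {R} N L m.
Arguments FD {R} N K L D P.
Arguments Pstar {R} N K L D m.
Arguments unif {R} M _.

(* Main.v *)
Require Import Defs.
From HB Require Import structures.
From mathcomp Require Import all_boot all_order all_algebra.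
From mathcomp Require Import all_classical all_reals all_analysis.
Import Order.TTheory GRing.Theory Num.Theory.
From mathcomp Require Import ring lra zify.
Local Open Scope ring_scope.


Section Scalar.
Variable R : realType.

Lemma ln_lt_sub1 {z : R} : 0 < z -> z != 1 -> ln z < z - 1.
Proof.
move=> z0 z1.
have h : ln z != 0 by rewrite ln_eq0.
have := expR_gt1Dx h; rewrite lnK ?posrE //; lra.
Qed.

Lemma ln_le_sub1 {z : R} : 0 < z -> ln z <= z - 1.
Proof.
move=> z0; have [->|z1] := eqVneq z 1; first by rewrite ln1 subrr.
exact/ltW/ln_lt_sub1.
Qed.

Lemma pow_tan_lt1 {a y : R} : 0 < a -> a < 1 -> 0 <= y ->
  y `^ a <= 1 + a * (y - 1) /\ (y != 1 -> y `^ a < 1 + a * (y - 1)).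
Proof.
move=> a0 a1 y0.
have [->|yp] := eqVneq y 0.
  rewrite powR0; last by rewrite gt_eqF.
  split; [|move=> _]; lra.
have ypos : 0 < y by rewrite lt_neqAle eq_sym yp.
set t := 1 + a * (y - 1).
have tpos : 0 < t by rewrite /t; nra.
have key : a * ln y - ln t = a * ln (y / t) + (1 - a) * ln (1 / t).
  rewrite ln_div ?posrE // ln_div ?posrE // ln1; ring.
have e1 := ln_le_sub1 (divr_gt0 ypos tpos).
have e2 := ln_le_sub1 (divr_gt0 ltr01 tpos).
have sumz : a * (y / t - 1) + (1 - a) * (1 / t - 1) = 0.
  rewrite /t; field; rewrite -/t; exact: lt0r_neq0.
have pa : 0 < y `^ a by apply: powR_gt0.
have lnpa : ln (y `^ a) = a * ln y by rewrite ln_powR.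
split.
  rewrite -ler_ln ?posrE // lnpa.
  have : a * ln y - ln t <= 0.
    rewrite key -sumz; apply: lerD; apply: ler_wpM2l => //; lra.
  lra.
move=> y1.
rewrite -ltr_ln ?posrE // lnpa.
have : a * ln y - ln t < 0.
  rewrite key -sumz.
  have [yt|yt] := eqVneq (y / t) 1.
    have t1 : t != 1.
      apply/eqP => t1; move: yt; rewrite t1 divr1 => /eqP; exact/negP.
    have l2 : ln (1 / t) < 1 / t - 1.
      apply: ln_lt_sub1; first exact: divr_gt0.
      rewrite div1r invr_eq1; exact: t1.
    apply: ler_ltD; first by apply: ler_wpM2l => //; lra.
    rewrite ltr_pM2l; [exact: l2|lra].
  have l1 : ln (y / t) < y / t - 1 by apply: ln_lt_sub1 => //; exact: divr_gt0.
  apply: ltr_leD; first by rewrite ltr_pM2l.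
  apply: ler_wpM2l => //; lra.
lra.
Qed.

Lemma pow_tan_gt1 {a y : R} : 1 < a -> 0 <= y ->
  1 + a * (y - 1) <= y `^ a /\ (y != 1 -> 1 + a * (y - 1) < y `^ a).
Proof.
move=> a1 y0.
have a0 : 0 < a by lra.
have ia0 : 0 < a^-1 by rewrite invr_gt0.
have ia1 : a^-1 < 1 by rewrite invf_lt1.
have w0 : 0 <= y `^ a by apply: powR_ge0.
have [h1 h2] := pow_tan_lt1 ia0 ia1 w0.
have yy : (y `^ a) `^ a^-1 = y by rewrite -powRrM mulfV ?gt_eqF // powRr1.
rewrite yy in h1 h2.
have e : forall w, 1 + a * (y - 1) <= w <-> y <= 1 + a^-1 * (w - 1).
  move=> w; split => h.
    rewrite -(ler_pM2l a0) mulrDr mulrA mulfV ?gt_eqF //; lra.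
  move: h; rewrite -(ler_pM2l a0) mulrDr mulrA mulfV ?gt_eqF //; lra.
split; first by apply/e.
move=> y1.
have wne : y `^ a != 1.
  apply/eqP => w1; move: yy; rewrite w1 powR1 => y1'; by rewrite -y1' eqxx in y1.
have := h2 wne.
rewrite -(ltr_pM2l a0) mulrDr mulrA mulfV ?gt_eqF //; lra.
Qed.

End Scalar.
Arguments pow_tan_gt1 {R a y}.
Arguments pow_tan_lt1 {R a y}.
Arguments ln_le_sub1 {R z}.
Arguments ln_lt_sub1 {R z}.

Section Block.
Variable R : realType.

Definition Tangent (g : R -> R) (c : R) := exists b : R, forall x, 0 <= x ->
  g c + b * (x - c) <= g x /\ (x != c -> g c + b * (x - c) < g x).

Lemma tan_xlnx (Mi c : R) : 0 < Mi -> 0 < c ->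
  Tangent (fun x => if x == 0 then 0 else x * ln (x / Mi)) c.
Proof.
move=> Mi0 c0; exists (ln (c / Mi) + 1) => x x0 /=.
rewrite (gt_eqF c0).
have [->|xn0] := eqVneq x 0.
  have h : c * ln (c / Mi) + (ln (c / Mi) + 1) * (0 - c) = - c by ring.
  rewrite h; split; [|move=> _]; lra.
idtac.
have xp : 0 < x by rewrite lt_neqAle eq_sym xn0.
have E : c * ln (c / Mi) + (ln (c / Mi) + 1) * (x - c) - x * ln (x / Mi)
  = x * ln (c / x) - (c - x).
  rewrite !ln_div ?posrE //; ring.
have H1 : x * ln (c / x) <= x * (c / x - 1).
  by apply: ler_wpM2l; [exact: ltW | apply: ln_le_sub1; exact: divr_gt0].
have H2 : x * (c / x - 1) = c - x.
  by rewrite mulrBr mulrCA mulfV ?gt_eqF // mulr1 mulr1.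
split.
  rewrite -subr_le0 E; lra.
move=> xc.
have H3 : x * ln (c / x) < x * (c / x - 1).
  rewrite ltr_pM2l //; apply: ln_lt_sub1; first exact: divr_gt0.
  apply/eqP => h; move: xc; rewrite -[c](mulfVK xn0) h mul1r eqxx //.
rewrite -subr_lt0 E; lra.
Qed.

Lemma tan_pow_gt1 (a c : R) : 1 < a -> 0 < c -> Tangent (fun x => x `^ a) c.
Proof.
move=> a1 c0; exists (a * c `^ a / c) => x x0.
have cp : 0 < c `^ a by apply: powR_gt0.
have xc : x = c * (x / c) by rewrite mulrCA mulfV ?gt_eqF // mulr1.
have y0 : 0 <= x / c by apply: divr_ge0 => //; exact: ltW.
have E : x `^ a = c `^ a * (x / c) `^ a.
  by rewrite {1}xc powRM //; exact: ltW.
have F : c `^ a + a * c `^ a / c * (x - c) = c `^ a * (1 + a * (x / c - 1)).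
  field; exact: lt0r_neq0.
have [h1 h2] := pow_tan_gt1 a1 y0.
rewrite E F; split; first by rewrite ler_pM2l.
move=> xnc; rewrite ltr_pM2l //; apply: h2.
apply/eqP => h; move: xnc; rewrite xc h mulr1 eqxx //.
Qed.

Lemma tan_pow_lt1 (a c : R) : 0 < a -> a < 1 -> 0 < c ->
  Tangent (fun x => - x `^ a) c.
Proof.
move=> a0 a1 c0; exists (- (a * c `^ a / c)) => x x0.
have cp : 0 < c `^ a by apply: powR_gt0.
have xc : x = c * (x / c) by rewrite mulrCA mulfV ?gt_eqF // mulr1.
have y0 : 0 <= x / c by apply: divr_ge0 => //; exact: ltW.
have E : x `^ a = c `^ a * (x / c) `^ a.
  by rewrite {1}xc powRM //; exact: ltW.
have F : - c `^ a + - (a * c `^ a / c) * (x - c) = - (c `^ a * (1 + a * (x / c - 1))).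
  field; exact: lt0r_neq0.
have [h1 h2] := pow_tan_lt1 a0 a1 y0.
rewrite E F lerN2 ltrN2; split; first by rewrite ler_pM2l.
move=> xnc; rewrite ltr_pM2l //; apply: h2.
apply/eqP => h; move: xnc; rewrite xc h mulr1 eqxx //.
Qed.

Lemma block (I : finType) (A : pred I) (g : R -> R) (x : I -> R) (c : R) :
  0 <= c -> (0 < c -> Tangent g c) -> (forall i, A i -> 0 <= x i) ->
  \sum_(i | A i) x i = \sum_(i | A i) c ->
  \sum_(i | A i) g c <= \sum_(i | A i) g (x i) /\
  (\sum_(i | A i) g (x i) = \sum_(i | A i) g c -> forall i, A i -> x i = c).
Proof.
move=> c0 tg x0 sx.
have [c00|cp] := eqVneq c 0.
  subst c.
  have xz : forall i, A i -> x i = 0.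
    by move: sx; rewrite big1_eq => sx; apply: psumr_eq0P sx.
  have -> : \sum_(i | A i) g (x i) = \sum_(i | A i) g 0.
    by apply: eq_bigr => i Ai; rewrite xz.
  by split => // _.
have cpos : 0 < c by rewrite lt_neqAle eq_sym cp.
have [b Hb] := tg cpos.
have S1 : \sum_(i | A i) (g c + b * (x i - c)) = \sum_(i | A i) g c.
  rewrite big_split /= -mulr_sumr sumrB sx subrr mulr0 addr0 //.
split.
  rewrite -S1; apply: ler_sum => i Ai; exact: (Hb _ (x0 i Ai)).1.
move=> eqs i Ai.
have D0 : \sum_(i | A i) (g (x i) - (g c + b * (x i - c))) = 0.
  by rewrite sumrB S1 eqs subrr.
have Hi : g (x i) - (g c + b * (x i - c)) = 0.
  apply: (psumr_eq0P _ D0) => // j Aj; rewrite subr_ge0; exact: (Hb _ (x0 j Aj)).1.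
apply/eqP; apply: contraT => xnc.
have := (Hb _ (x0 i Ai)).2 xnc; rewrite -subr_gt0 Hi ltxx //.
Qed.

End Block.
Arguments Tangent {R}.
Arguments tan_xlnx {R Mi c}.
Arguments tan_pow_gt1 {R a c}.
Arguments tan_pow_lt1 {R a c}.

Section Key.
Variable R : realType.

Lemma split_sum {M : nat} (N : nat) (F : 'I_M -> R) :
  \sum_(m < M) F m = \sum_(m < M | (m < N)%N) F m + \sum_(m < M | ~~ (m < N)%N) F m.
Proof. by rewrite (bigID (fun m : 'I_M => (m < N)%N)). Qed.

Lemma key (g : R -> R) (M N : nat) (P Q : 'I_M -> R) (ch ct : R) :
  0 <= ch -> 0 <= ct -> (forall c, 0 < c -> Tangent g c) ->
  (forall m, 0 <= P m) -> (forall m, Q m = if (m < N)%N then ch else ct) ->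
  \sum_(m < M | (m < N)%N) P m = \sum_(m < M | (m < N)%N) ch ->
  \sum_(m < M | ~~ (m < N)%N) P m = \sum_(m < M | ~~ (m < N)%N) ct ->
  \sum_(m < M) g (Q m) <= \sum_(m < M) g (P m) /\
  (\sum_(m < M) g (P m) = \sum_(m < M) g (Q m) -> forall m, P m = Q m).
Proof.
move=> ch0 ct0 tg P0 QE sh st.
have [h1 h2] := @block R _ (fun m : 'I_M => (m < N)%N) g P ch ch0 (tg _) (fun i _ => P0 i) sh.
have [t1 t2] := @block R _ (fun m : 'I_M => ~~ (m < N)%N) g P ct ct0 (tg _) (fun i _ => P0 i) st.
have eQh : \sum_(m < M | (m < N)%N) g (Q m) = \sum_(m < M | (m < N)%N) g ch.
  by apply: eq_bigr => m hm; rewrite QE hm.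
have eQt : \sum_(m < M | ~~ (m < N)%N) g (Q m) = \sum_(m < M | ~~ (m < N)%N) g ct.
  by apply: eq_bigr => m hm; rewrite QE (negbTE hm).
rewrite (split_sum N (fun m => g (Q m))) (split_sum N (fun m => g (P m))) eQh eQt.
split; first exact: lerD.
move=> eq m.
have Eh : \sum_(m < M | (m < N)%N) g (P m) = \sum_(m < M | (m < N)%N) g ch.
  apply/eqP; rewrite eq_le h1 andbT; lra.
have Et : \sum_(m < M | ~~ (m < N)%N) g (P m) = \sum_(m < M | ~~ (m < N)%N) g ct.
  apply/eqP; rewrite eq_le t1 andbT; lra.
rewrite QE; case: ifPn => hm; [exact: h2 | exact: t2].
Qed.

Lemma sum_geom (N K : nat) : (0 < N)%N ->
  (N%:R - 1) * \sum_(k < K) (N%:R ^+ k)^-1 + N%:R / N%:R ^+ K = N%:R :> R.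
Proof.
move=> N0; have nz : N%:R != 0 :> R by rewrite pnatr_eq0 -lt0n.
elim: K => [|K IH]; first by rewrite big_ord0 mulr0 add0r expr0 divr1.
rewrite big_ord_recr /= -[in RHS]IH exprS.
have nzK : N%:R ^+ K != 0 :> R by rewrite expf_neq0.
field; by rewrite nzK nz.
Qed.

End Key.
Arguments split_sum {R M} N F.
Arguments key {R}.

Section Main.
Variables (R : realType) (N K L : nat) (D : R).
Hypotheses (hN : (3 <= N)%N) (hK : (2 <= K)%N) (hL1 : (1 <= L)%N) (hL2 : (L < N - 1)%N)
  (hD1 : 1 <= D) (hD2 : D <= \sum_(k < K) (N%:R ^+ k)^-1).

Let M := Mdim N K L.
Let nN : R := N%:R.
Let nL : R := L%:R.
Let nM : R := M%:R.
Let x : R := nL * (D - 1).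
Let ch : R := (1 - x) / nN.
Let ct : R := x / (nM - nN).
Let Q : R := (nL + 1) ^+ K.-1.
Let Q' : R := (nL + 1) ^+ K.-2.

Lemma nN3 : 3 <= nN. Proof. by rewrite /nN (ler_nat R 3 N). Qed.
Lemma nL1 : 1 <= nL. Proof. by rewrite /nL (ler_nat R 1 L). Qed.
Lemma nLN : nL + 2 <= nN.
Proof. have -> : nL + 2 = (L + 2)%N%:R by rewrite /nL natrD. rewrite /nN ler_nat. lia. Qed.
Lemma x0 : 0 <= x.
Proof. rewrite /x; apply: mulr_ge0; [have := nL1; lra | rewrite subr_ge0; exact: hD1]. Qed.

Lemma DS : (nN - 1) * (D - 1) <= 1.
Proof.
have hg := @sum_geom R N K (ltn_trans (isT : (0 < 2)%N) hN).
have hp : 0 <= nN / nN ^+ K by apply: divr_ge0; [rewrite /nN ler0n | apply: exprn_ge0; rewrite ler0n].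
have h2 := hD2; rewrite -/nN in hg h2.
move: hg h2 hp; set S := \sum_(k < K) _; move=> hg h2 hp.
have := nN3; nra.
Qed.

Lemma xL : x * (nL + 1) <= nL.
Proof. have := DS; have := nLN; have := nL1; have := x0; rewrite /x; nra. Qed.

Lemma hpos : 0 < 1 - x.
Proof. have := xL; have := nL1; have := x0; nra. Qed.

Lemma QQ : Q = (nL + 1) * Q'.
Proof. by rewrite /Q /Q' -exprS; congr (_ ^+ _); lia. Qed.

Lemma Q'1 : 1 <= Q'.
Proof. rewrite /Q'; apply: exprn_ege1; have := nL1; lra. Qed.

Lemma nME : nM = nN * Q.
Proof. by rewrite /nM /M /Mdim natrM natrX -natr1. Qed.

Lemma nMN : 0 < nM - nN.
Proof.
rewrite nME QQ; have h1 := Q'1; have h2 := nL1; have h3 := nN3.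
have : 2 <= (nL + 1) * Q' by nra.
move: ((nL + 1) * Q') => y hy; nra.
Qed.

Lemma chpos : 0 < ch.
Proof. rewrite /ch; apply: divr_gt0; [exact: hpos | have := nN3; lra]. Qed.

Lemma ct0 : 0 <= ct.
Proof. rewrite /ct; apply: divr_ge0; [exact: x0 | exact: ltW nMN]. Qed.

Lemma ctch : ct <= ch.
Proof.
have e : ch - ct = (nM - nN - x * nM) / (nN * (nM - nN)).
  rewrite /ch /ct; field; apply/andP; split; [have := nMN|have := nN3]; lra.
rewrite -subr_ge0 e; apply: divr_ge0.
  rewrite nME QQ; have h1 := xL; have h2 := Q'1; have h3 := nN3.
  have hy : 1 <= (nL + 1) * (1 - x) by lra.
  have hyq : 1 <= (nL + 1) * (1 - x) * Q' by nra.
  have -> : nN * ((nL + 1) * Q') - nN - x * (nN * ((nL + 1) * Q'))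
     = nN * ((nL + 1) * (1 - x) * Q' - 1) by ring.
  apply: mulr_ge0; lra.
have := nMN; have := nN3; nra.
Qed.


Lemma NM : (N <= M)%N.
Proof. rewrite /M /Mdim; apply: leq_pmulr; rewrite expn_gt0. done. Qed.

Lemma sum_head (c : R) : \sum_(m < M | (m < N)%N) c = nN * c.
Proof.
rewrite -(big_ord_widen M (fun _ => c) NM) sumr_const card_ord -mulr_natl //.
Qed.

Lemma sum_all (c : R) : \sum_(m < M) c = nM * c.
Proof. by rewrite sumr_const card_ord -mulr_natl. Qed.

Lemma sum_tail (c : R) : \sum_(m < M | ~~ (m < N)%N) c = (nM - nN) * c.
Proof.
have := sum_all c; rewrite (split_sum N) sum_head => h.
rewrite mulrBl -h; ring.
Qed.

Lemma sh_ch : \sum_(m < M | (m < N)%N) ch = 1 - x.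
Proof. rewrite sum_head /ch; field; have := nN3; rewrite -/nN; lra. Qed.

Lemma st_ct : \sum_(m < M | ~~ (m < N)%N) ct = x.
Proof. rewrite sum_tail /ct; field; have := nMN; lra. Qed.

Lemma PstarE (m : 'I_M) : Pstar N K L D m = if (m < N)%N then ch else ct.
Proof. by []. Qed.

Lemma costsum (P : 'I_M -> R) :
  \sum_(m < M) P m * dcost N L m =
  nL * \sum_(m < M | (m < N)%N) P m + (nL + 1) * \sum_(m < M | ~~ (m < N)%N) P m.
Proof.
rewrite (split_sum N) !mulr_sumr; congr (_ + _); apply: eq_bigr => m hm;
  rewrite /dcost ?hm ?(negbTE hm) mulrC //.
by rewrite -natr1.
Qed.

Lemma FD_sums {P : 'I_M -> R} : FD N K L D P ->
  (forall m, 0 <= P m) /\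
  \sum_(m < M | (m < N)%N) P m = 1 - x /\
  \sum_(m < M | ~~ (m < N)%N) P m = x.
Proof.
move=> [[P0 P1] Pc]; split => //.
move: P1 Pc; rewrite costsum (split_sum N).
move: (\sum_(m < M | (m < N)%N) P m) (\sum_(m < M | ~~ (m < N)%N) P m) => a b s1 s2.
have nL0 : nL != 0 by have := nL1; rewrite -/nL => h; rewrite gt_eqF //; lra.
have s3 : nL * a + (nL + 1) * b = D * nL.
  by rewrite -s2 mulfVK.
rewrite /x; split; nra.
Qed.

Lemma Pstar_FD : FD N K L D (Pstar N K L D).
Proof.
have hh := sh_ch; have ht := st_ct.
have eh : \sum_(m < M | (m < N)%N) Pstar N K L D m = 1 - x.
  by rewrite -hh; apply: eq_bigr => m hm; rewrite PstarE hm.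
have et : \sum_(m < M | ~~ (m < N)%N) Pstar N K L D m = x.
  by rewrite -ht; apply: eq_bigr => m hm; rewrite PstarE (negbTE hm).
split; first split.
- move=> m; rewrite PstarE; case: ifP => _; [exact: ltW chpos | exact: ct0].
- rewrite (split_sum N) eh et; ring.
rewrite -/M costsum eh et.
have nL0 : nL != 0 by have := nL1; rewrite -/nL => h; rewrite gt_eqF //; lra.
apply: (mulIf nL0); rewrite mulfVK // /x; ring.
Qed.

Lemma exists_big {P : 'I_M -> R} : FD N K L D P -> exists m : 'I_M, (m < N)%N /\ ch <= P m.
Proof.
move=> hP; have [P0 [Ph Pt]] := FD_sums hP.
case: (boolP [exists m : 'I_M, (m < N)%N && (ch <= P m)]).
  by move=> /existsP [m /andP [h1 h2]]; exists m.
move=> /existsPn H; exfalso.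
have h0 : (0 < M)%N by apply: leq_trans NM; apply: leq_trans hN.
have : \sum_(m < M | (m < N)%N) P m < \sum_(m < M | (m < N)%N) ch.
  apply: ltr_sum.
    apply/hasP; exists (Ordinal h0); first by rewrite mem_index_enum.
    by rewrite /=; apply: leq_trans hN.
  move=> m hm; have := H m; rewrite hm /= -ltNge //.
by rewrite Ph sh_ch ltxx.
Qed.

Lemma pos_sum (F : 'I_M -> R) (m : 'I_M) : (forall i, 0 <= F i) -> 0 < F m -> 0 < \sum_i F i.
Proof.
move=> F0 Fm; rewrite (bigD1 m) //=; apply: (lt_le_trans Fm); rewrite lerDl.
by apply: sumr_ge0 => i _.
Qed.

Lemma KEY (g : R -> R) {P : 'I_M -> R} : (forall c, 0 < c -> Tangent g c) -> FD N K L D P ->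
  \sum_(m < M) g (Pstar N K L D m) <= \sum_(m < M) g (P m) /\
  (\sum_(m < M) g (P m) = \sum_(m < M) g (Pstar N K L D m) -> forall m, P m = Pstar N K L D m).
Proof.
move=> tg hP; have [P0 [Ph Pt]] := FD_sums hP.
apply: (key g M N P _ ch ct (ltW chpos) ct0 tg P0 PstarE).
  by rewrite Ph sh_ch.
by rewrite Pt st_ct.
Qed.

Lemma nMpos : 0 < nM.
Proof. have := nMN; have := nN3; lra. Qed.

Lemma part1 (a : R) : 0 < a ->
     FD N K L D (Pstar N K L D) /\
     forall P : 'I_(Mdim N K L) -> R, FD N K L D P ->
       renyi a (Pstar N K L D) (unif _) <= renyi a P (unif _) /\
       (renyi a P (unif _) = renyi a (Pstar N K L D) (unif _) ->
          forall m, P m = Pstar N K L D m).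
Proof.
move=> a0; split; first exact: Pstar_FD.
move=> P hP.
have Mi0 : 0 < nM^-1 by rewrite invr_gt0 nMpos.
have [->|a1] := eqVneq a 1.
  rewrite /renyi /unif eqxx -/M -/nM.
  have HH := KEY (fun y : R => if y == 0 then 0 else y * ln (y / nM^-1)) (fun c c0 => tan_xlnx Mi0 c0) hP; exact HH.
rewrite /renyi /unif (negbTE a1) -!mulr_suml -/M -/nM.
have Kc : 0 < nM^-1 `^ (1 - a) by apply: powR_gt0.
have [m1 [m1N m1P]] := exists_big hP.
have [m2 [m2N m2P]] := exists_big Pstar_FD.
have SPpos : 0 < \sum_(m < M) P m `^ a.
  apply: (pos_sum _ m1) => [i|]; first exact: powR_ge0.
  by apply: powR_gt0; apply: lt_le_trans m1P; exact: chpos.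
have SSpos : 0 < \sum_(m < M) Pstar N K L D m `^ a.
  apply: (pos_sum _ m2) => [i|]; first exact: powR_ge0.
  by apply: powR_gt0; apply: lt_le_trans m2P; exact: chpos.
move: SPpos SSpos.
set SP := \sum_(m < M) P m `^ a; set SS := \sum_(m < M) Pstar N K L D m `^ a => SPpos SSpos.
have p1 : 0 < SP * nM^-1 `^ (1 - a) by apply: mulr_gt0.
have p2 : 0 < SS * nM^-1 `^ (1 - a) by apply: mulr_gt0.
have ainv : (a - 1)^-1 != 0 by rewrite invr_eq0 subr_eq0.
have eqlemma : (a - 1)^-1 * ln (SP * nM^-1 `^ (1 - a)) = (a - 1)^-1 * ln (SS * nM^-1 `^ (1 - a)) -> SP = SS.
  move=> /(mulfI ainv) /(ln_inj _ _) e.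
  by apply: (mulIf (lt0r_neq0 Kc)); apply: e; rewrite posrE.
have [alt|agt] : a < 1 \/ 1 < a by move: a1; rewrite neq_lt => /orP.
  have [k1 k2] := KEY (fun y => - y `^ a) (fun c c0 => tan_pow_lt1 a0 alt c0) hP.
  rewrite !sumrN lerN2 -/SP -/SS in k1 k2.
  split.
    rewrite ler_nM2l; last by rewrite invr_lt0 subr_lt0.
    rewrite ler_ln ?posrE // ler_pM2r //.
  by move=> e; apply: k2; rewrite (eqlemma e).
have [k1 k2] := KEY (fun y => y `^ a) (fun c c0 => tan_pow_gt1 agt c0) hP.
rewrite -/SP -/SS in k1 k2.
split.
  rewrite ler_pM2l; last by rewrite invr_gt0 subr_gt0.
  rewrite ler_ln ?posrE // ler_pM2r //.
by move=> e; apply: k2; rewrite (eqlemma e).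
Qed.

Let V (P : 'I_M -> R) := \big[Num.max/0]_(m < M) (P m / nM^-1).

Lemma Mi0 : 0 < nM^-1. Proof. by rewrite invr_gt0 nMpos. Qed.

Lemma chV0 : 0 < ch / nM^-1.
Proof. apply: divr_gt0; [exact: chpos | exact: Mi0]. Qed.

Lemma V_ge {P : 'I_M -> R} : FD N K L D P -> ch / nM^-1 <= V P.
Proof.
move=> hP; have [m [_ hm]] := exists_big hP.
apply: (bigmax_sup m) => //; rewrite ler_pM2r //; rewrite invr_gt0; exact: Mi0.
Qed.

Lemma V_le {P : 'I_M -> R} : (forall m, P m <= ch) -> V P <= ch / nM^-1.
Proof.
move=> H; apply: bigmax_le; first exact: ltW chV0.
move=> i _; rewrite ler_pM2r //; rewrite invr_gt0; exact: Mi0.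
Qed.

Lemma V_le_inv {P : 'I_M -> R} : V P <= ch / nM^-1 -> forall m, P m <= ch.
Proof.
move=> /bigmax_leP [_ H] m; have := H m isT.
rewrite ler_pM2r //; rewrite invr_gt0; exact: Mi0.
Qed.

Lemma part2 (P : 'I_(Mdim N K L) -> R) : FD N K L D P ->
     ((forall Q : 'I_(Mdim N K L) -> R, FD N K L D Q ->
          renyi_inf P (unif _) <= renyi_inf Q (unif _)) <->
      ((forall m : 'I_(Mdim N K L), (m < N)%N ->
          P m = (1 - L%:R * (D - 1)) / N%:R) /\
       (forall m : 'I_(Mdim N K L), (N <= m)%N -> 0 <= P m) /\
       \sum_(m < Mdim N K L | (N <= m)%N) P m = L%:R * (D - 1) /\
       (forall m : 'I_(Mdim N K L), (N <= m)%N ->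
          P m <= (1 - L%:R * (D - 1)) / N%:R))).
Proof.
move=> hP; have [P0 [Ph Pt]] := FD_sums hP.
have tailE : \sum_(m < Mdim N K L | (N <= m)%N) P m = \sum_(m < M | ~~ (m < N)%N) P m.
  by apply: eq_bigl => m; rewrite leqNgt.
rewrite tailE.
have VP := V_ge hP.
rewrite /renyi_inf /unif -/M -/nM -/(V P).
split.
  move=> H.
  have H1 := H _ Pstar_FD; rewrite /renyi_inf /unif -/M -/nM -/(V _) in H1.
  have Vs : V (Pstar N K L D) <= ch / nM^-1.
    apply: V_le => m; rewrite PstarE; case: ifP => _; [exact: lexx | exact: ctch].
  have Vs' : 0 < V (Pstar N K L D) by have := chV0; have := V_ge Pstar_FD; lra.
  have := chV0 => c0.
  have pP : V P \in Num.pos by rewrite posrE; lra.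
  have pS : V (Pstar N K L D) \in Num.pos by rewrite posrE.
  rewrite (ler_ln pP pS) in H1.
  have Pb := V_le_inv (le_trans H1 Vs).
  have Hh : forall m : 'I_M, (m < N)%N -> P m = ch.
    have S0 : \sum_(m < M | (m < N)%N) (ch - P m) = 0.
      by rewrite sumrB Ph sh_ch subrr.
    move=> m hm; apply/eqP; rewrite eq_sym -subr_eq0; apply/eqP.
    by apply: (psumr_eq0P _ S0) => // j _; rewrite subr_ge0.
  split; first exact: Hh.
  split; first by move=> m _.
  split; first exact: Pt.
  by move=> m _; exact: Pb.
move=> [Hh [_ [_ Hb]]] Q0 hQ.
rewrite /renyi_inf /unif -/M -/nM -/(V _).
have VQ := V_ge hQ.
have pQ : V Q0 \in Num.pos by rewrite posrE; have := chV0; lra.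
have Pb : forall m, P m <= ch.
  move=> m; case: (ltnP m N) => hm; first by rewrite (Hh m hm).
  exact: Hb.
have c0 := chV0.
have pP : V P \in Num.pos by rewrite posrE; lra.
rewrite (ler_ln pP pQ).
exact: le_trans (V_le Pb) VQ.
Qed.

End Main.

Theorem lemma2 (R : realType) (N K L : nat) (D : R)
  (hN : (3 <= N)%N) (hK : (2 <= K)%N) (hL1 : (1 <= L)%N) (hL2 : (L < N - 1)%N)
  (hD1 : 1 <= D) (hD2 : D <= \sum_(k < K) (N%:R ^+ k)^-1) :
  (* (i) unique minimizer for every 0 < alpha < oo *)
  (forall a : R, 0 < a ->
     FD N K L D (Pstar N K L D) /\
     forall P : 'I_(Mdim N K L) -> R, FD N K L D P ->
       renyi a (Pstar N K L D) (unif _) <= renyi a P (unif _) /\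
       (renyi a P (unif _) = renyi a (Pstar N K L D) (unif _) ->
          forall m, P m = Pstar N K L D m)) /\
  (* (ii) characterization of minimizers for alpha = oo *)
  (forall P : 'I_(Mdim N K L) -> R, FD N K L D P ->
     ((forall Q : 'I_(Mdim N K L) -> R, FD N K L D Q ->
          renyi_inf P (unif _) <= renyi_inf Q (unif _)) <->
      ((forall m : 'I_(Mdim N K L), (m < N)%N ->
          P m = (1 - L%:R * (D - 1)) / N%:R) /\
       (forall m : 'I_(Mdim N K L), (N <= m)%N -> 0 <= P m) /\
       \sum_(m < Mdim N K L | (N <= m)%N) P m = L%:R * (D - 1) /\
       (forall m : 'I_(Mdim N K L), (N <= m)%N ->
          P m <= (1 - L%:R * (D - 1)) / N%:R)))).
Proof.
split.
  by move=> a a0; apply: part1.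
by move=> P hP; apply: part2.
Qed.
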